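(* Fix $l,r>0$, $0<\alpha<\beta<1$ and $\delta\in(-1,1)$, and let $A_M=l+\frac{\alpha}{1-\beta}r$. Then for every $Q_0\in\mathbb{R}$ the functions $A\mapsto G_1(Q_0,A,\delta)$ and $A\mapsto G_2(Q_0,A,\delta)$ are continuous on $(0,A_M)$. Moreover, on $(0,A_M)$ one has $\partial_A N>0$ and $\partial_A B<0$.
   Context: With $\delta=\frac{D_2-D_1}{D_2+D_1}$ for diffusion constants $D_1,D_2>0$, for $Q_0\in\mathbb{R}$ and $A>0$ define $B=B(A)=\frac{1-\beta}{\alpha}(l-A)+r$, $S_a=\sqrt{Q_0^2+A^2}$, $S_b=\sqrt{Q_0^2+B^2}$, $N=N(A)=A-l+S_a-S_b$, and $G_1(Q_0,A,\delta)=\delta\Big(\ln\frac{S_a+\delta Q_0}{S_b+\delta Q_0}+\ln\frac{l}{r}\Big)-(1+\delta)\ln\frac{A}{B}+\ln\frac{S_a-Q_0}{S_b-Q_0}$, $G_2(Q_0,A,\delta)=\delta Q_0\ln\frac{S_a+\delta Q_0}{S_b+\delta Q_0}-N$. (These arise from the zero-current Poisson–Nernst–Planck problem for two ion species with valences $\pm1$: $l,r$ are boundary concentrations, $Q_2=2Q_0$ is the permanent charge on $(a,b)\subset(0,1)$, $\alpha=H(a)/H(1)$, $\beta=H(b)/H(1)$ with $H(x)=\int_0^x ds/h(s)$, $h>0$ the cross-sectional area.) *)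

(* Defs.v *)
From Stdlib Require Import Reals.
Open Scope R_scope.

Definition Bfun (l r alpha beta A : R) : R := (1 - beta) / alpha * (l - A) + r.
Definition Sa (Q0 A : R) : R := sqrt (Q0 ^ 2 + A ^ 2).
Definition Sb (l r alpha beta Q0 A : R) : R := sqrt (Q0 ^ 2 + (Bfun l r alpha beta A) ^ 2).
Definition Nfun (l r alpha beta Q0 A : R) : R :=
  A - l + Sa Q0 A - Sb l r alpha beta Q0 A.

Definition G1 (l r alpha beta Q0 A delta : R) : R :=
  let B := Bfun l r alpha beta A in
  let sa := Sa Q0 A in
  let sb := Sb l r alpha beta Q0 A in
  delta * (ln ((sa + delta * Q0) / (sb + delta * Q0)) + ln (l / r))
  - (1 + delta) * ln (A / B)
  + ln ((sa - Q0) / (sb - Q0)).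

Definition G2 (l r alpha beta Q0 A delta : R) : R :=
  let sa := Sa Q0 A in
  let sb := Sb l r alpha beta Q0 A in
  delta * Q0 * ln ((sa + delta * Q0) / (sb + delta * Q0))
  - Nfun l r alpha beta Q0 A.

(* Main.v *)
Require Import Defs.
From Stdlib Require Import Reals Lra.
From Coquelicot Require Import Coquelicot.
Open Scope R_scope.
Set Bullet Behavior "Strict Subproofs".

Lemma sq_gt (q x : R) : 0 < x -> Rabs q < sqrt (q ^ 2 + x ^ 2).
Proof.
  intros hx. rewrite <- sqrt_Rsqr_abs. apply sqrt_lt_1.
  - apply Rle_0_sqr.
  - nra.
  - unfold Rsqr. nra.
Qed.

Lemma sq_pos2 (q x d : R) : 0 < x -> -1 < d < 1 ->
  0 < sqrt (q ^ 2 + x ^ 2) + d * q /\ 0 < sqrt (q ^ 2 + x ^ 2) - q /\ 0 < sqrt (q ^ 2 + x ^ 2)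
  /\ 0 < q ^ 2 + x ^ 2.
Proof.
  intros hx hd. pose proof (sq_gt q x hx).
  destruct (Rle_or_lt 0 q).
  - rewrite Rabs_right in H by lra. repeat split; nra.
  - rewrite Rabs_left in H by lra. repeat split; nra.
Qed.

Theorem lemma3p4 (l r alpha beta delta : R)
  (hl : 0 < l) (hr : 0 < r) (ha : 0 < alpha) (hab : alpha < beta) (hb : beta < 1)
  (hd : -1 < delta < 1) :
  let AM := l + alpha / (1 - beta) * r in
  (forall Q0 A : R, 0 < A < AM ->
     continuity_pt (fun A' => G1 l r alpha beta Q0 A' delta) A /\
     continuity_pt (fun A' => G2 l r alpha beta Q0 A' delta) A) /\
  (forall Q0 A : R, 0 < A < AM ->
     (exists d, derivable_pt_lim (fun A' => Nfun l r alpha beta Q0 A') A d /\ 0 < d) /\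
     (exists d, derivable_pt_lim (fun A' => Bfun l r alpha beta A') A d /\ d < 0)).
Proof.
  intros AM.
  set (k := (1 - beta) / alpha).
  assert (hk : 0 < k) by (unfold k; apply Rdiv_lt_0_compat; lra).
  assert (hB : forall A, A < AM -> 0 < Bfun l r alpha beta A).
  { intros A hA. unfold Bfun. fold k. unfold AM in hA.
    assert (alpha / (1 - beta) = / k) by (unfold k; field; lra).
    rewrite H in hA.
    assert (k * (l - A) > - r). { apply Rmult_lt_reg_r with (/k). apply Rinv_0_lt_compat; lra.
      replace (- r * / k) with (- (r / k)) by (field; lra).
      replace (k * (l - A) * / k) with (l - A) by (field; lra). unfold Rdiv. lra. }
    lra. }
  split.
  - intros Q0 A [hA0 hA1].
    pose proof (hB A hA1) as hBA.
    destruct (sq_pos2 Q0 A delta hA0 hd) as (h1 & h2 & h3 & h4).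
    destruct (sq_pos2 Q0 _ delta hBA hd) as (h5 & h6 & h7 & h8).
    assert (hBe : Bfun l r alpha beta A = k*(l+-A)+r) by (unfold Bfun, k; ring).
    rewrite hBe in h5, h6, h7, h8, hBA.
    replace (Q0^2) with (Q0*(Q0*1)) in * by ring.
    replace (A^2) with (A*(A*1)) in * by ring.
    replace ((k*(l+-A)+r)^2) with ((k*(l+-A)+r)*((k*(l+-A)+r)*1)) in * by ring.
    split; apply derivable_continuous_pt; apply ex_derive_Reals_0;
      unfold G1, G2, Nfun, Sb, Sa in *; unfold Bfun; fold k; auto_derive.
    all: repeat split; try lra.
    all: apply Rmult_lt_0_compat; [lra | apply Rinv_0_lt_compat; lra].
  - intros Q0 A [hA0 hA1].
    pose proof (hB A hA1) as hBA.
    destruct (sq_pos2 Q0 A delta hA0 hd) as (h1 & h2 & h3 & h4).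
    destruct (sq_pos2 Q0 _ delta hBA hd) as (h5 & h6 & h7 & h8).
    assert (hBe : Bfun l r alpha beta A = k*(l+-A)+r) by (unfold Bfun, k; ring).
    rewrite hBe in h5, h6, h7, h8, hBA.
    replace (Q0^2) with (Q0*(Q0*1)) in * by ring.
    replace (A^2) with (A*(A*1)) in * by ring.
    replace ((k*(l+-A)+r)^2) with ((k*(l+-A)+r)*((k*(l+-A)+r)*1)) in * by ring.
    split.
    + exists (1 + A / Sa Q0 A + k * Bfun l r alpha beta A / Sb l r alpha beta Q0 A).
      split.
      * apply is_derive_Reals. unfold Nfun, Sb, Sa in *; unfold Bfun; fold k; auto_derive.
        { repeat split; lra. }
        replace (l-A) with (l+-A) by ring.
        replace (Q0^2+A^2) with (Q0*(Q0*1)+A*(A*1)) by ring.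
        replace (Q0^2+(k*(l+-A)+r)^2) with (Q0*(Q0*1)+(k*(l+-A)+r)*((k*(l+-A)+r)*1)) by ring.
        field. split; lra.
      * assert (0 < A / Sa Q0 A) by (apply Rdiv_lt_0_compat; [lra | apply sqrt_lt_R0; nra]).
        assert (0 < k * Bfun l r alpha beta A / Sb l r alpha beta Q0 A).
        { apply Rdiv_lt_0_compat. rewrite hBe; nra. apply sqrt_lt_R0. rewrite hBe. nra. }
        lra.
    + exists (- k). split; [|lra].
      apply is_derive_Reals. unfold Bfun; fold k. auto_derive. auto. ring.
Qed.
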